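(* Let $x_i,y_i\in\mathbb{Z}$ ($1\le i\le N$) with $x_i<x_{i+1}$ and $y_i<y_{i+1}$ for all $i$. For $\sigma\in\mathbb{S}_N$ define the Laurent monomial $$h_\sigma(\xi_1,\dots,\xi_N)=\prod_{(b,a)}\frac{\xi_b}{\xi_a}\prod_{i=1}^N\xi_{\sigma(i)}^{\,x_i-y_{\sigma(i)}-1},$$ the first product over all inversions $(b,a)$ of $\sigma$, and for $\gamma\in\{1,\dots,N\}$ let $h^\gamma_\sigma$ be the function of $\eta$ and $\xi_\delta$ ($\delta\neq\gamma$) obtained by substituting $\xi_\gamma=\eta/\prod_{\delta\ne\gamma}\xi_\delta$ into $h_\sigma$. (i) If $\sigma,\sigma'\in\mathbb{S}_N$ differ only by an interchange of two adjacent entries $\alpha$ and $\beta$, and $\gamma\ne\alpha,\beta$, then $h^\gamma_\sigma|_{\xi_\alpha=\xi_\beta}=h^\gamma_{\sigma'}|_{\xi_\alpha=\xi_\beta}$. (ii) If moreover $\gamma$ appears to the right of $\alpha$ and $\beta$ (in $\sigma$, equivalently in $\sigma'$) and $\gamma<\alpha,\beta$, then the exponents of $\xi_\alpha$ and of $\xi_\beta$ in $h^\gamma_\sigma$ and in $h^\gamma_{\sigma'}$ are at most $0$.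
   Context: Permutations are in one-line notation $\sigma(1)\cdots\sigma(N)$; an inversion $(b,a)$ of $\sigma$ is a pair of entries with $b>a$ and $b$ appearing to the left of $a$ in $\sigma$. *)

(* Defs.v *)
From HB Require Import structures.
From mathcomp Require Import all_boot all_order all_algebra all_fingroup.
Set Implicit Arguments. Unset Strict Implicit. Unset Printing Implicit Defensive.
Import Order.TTheory GRing.Theory Num.Theory.
Local Open Scope ring_scope.

(* A Laurent monomial  prod_v X_v^(m v)  in the variables V is represented by its
   integer exponent vector m.  Product of monomials = sum of exponent vectors,
   inverse = negation, k-th power = scaling by k. *)
Definition lmono (V : finType) := {ffun V -> int}.

Definition mvar (V : finType) (v : V) : lmono V := [ffun w => (w == v)%:R].

Definition msubst (U W : finType) (f : U -> lmono W) (m : lmono U) : lmono W :=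
  \sum_(u : U) (f u) *~ m u.

(* Entries and positions are 0-indexed ('I_N); an inversion (b,a) is a pair of
   entries with b > a and b to the left of a, i.e. sigma^-1 b < sigma^-1 a. *)
Definition h_sigma (N : nat) (x y : 'I_N -> int) (s : {perm 'I_N}) : lmono 'I_N :=
  (\sum_(b : 'I_N) \sum_(a : 'I_N | (a < b)%N && ((s^-1)%g b < (s^-1)%g a)%N)
      (mvar b - mvar a))
  + \sum_(i : 'I_N) (mvar (s i)) *~ (x i - y (s i) - 1).

(* Variables of h^gamma: None = eta, Some d = xi_d (Some gamma does not occur). *)
Definition eta (N : nat) : lmono (option 'I_N) := mvar None.
Definition xi (N : nat) (d : 'I_N) : lmono (option 'I_N) := mvar (Some d).

Definition h_gamma (N : nat) (x y : 'I_N -> int) (g : 'I_N) (s : {perm 'I_N})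
  : lmono (option 'I_N) :=
  msubst (fun c : 'I_N =>
            if c == g then eta N - \sum_(d : 'I_N | d != g) xi d else xi c)
         (h_sigma x y s).

(* Restriction xi_alpha = xi_beta: replace the variable xi_beta by xi_alpha. *)
Definition restr_eq (N : nat) (a b : 'I_N) (m : lmono (option 'I_N))
  : lmono (option 'I_N) :=
  msubst (fun v : option 'I_N => if v == Some b then xi a else mvar v) m.

Definition increasing (N : nat) (x : 'I_N -> int) : Prop :=
  forall i j : 'I_N, (j : nat) = i.+1 -> x i < x j.

Definition adjacent_swap (N : nat) (s s' : {perm 'I_N}) (a b : 'I_N) : Prop :=
  [/\ a != b,
      (((s^-1)%g a).+1 = (s^-1)%g b \/ ((s^-1)%g b).+1 = (s^-1)%g a)%N &
      forall k : 'I_N, s' k = tperm a b (s k)].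

(* Main.v *)
Require Import Defs.
From HB Require Import structures.
From mathcomp Require Import all_boot all_order all_algebra all_fingroup.
From mathcomp Require Import zify ring.
Import Order.TTheory GRing.Theory Num.Theory.
Local Open Scope ring_scope.

Lemma sum_lt_ord (N : nat) (c : nat) : (c <= N)%N ->
  (\sum_(a : 'I_N) (a < c : nat))%N = c.
Proof.
move=> cN; rewrite -(big_mkord xpredT (fun i => (i < c : nat))).
rewrite (big_cat_nat (leq0n c) cN) /=.
have -> : (\sum_(0 <= i < c) (i < c : nat) = \sum_(0 <= i < c) 1)%N.
  by apply: eq_big_nat => i /andP[_ ->].
have -> : (\sum_(c <= i < N) (i < c : nat) = \sum_(c <= i < N) 0)%N.
  by apply: eq_big_nat => i /andP[ci _]; rewrite ltnNge ci.
by rewrite !sum_nat_const_nat muln0 muln1 subn0 addn0.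
Qed.

Lemma inv_count (N : nat) (s : {perm 'I_N}) (c : 'I_N) :
  (\sum_(a : 'I_N) ((a < c) && ((s^-1)%g c < (s^-1)%g a)%N : nat) + (s^-1)%g c
   = c + \sum_(a : 'I_N) ((c < a) && ((s^-1)%g a < (s^-1)%g c)%N : nat))%N.
Proof.
have e1 : (\sum_(a : 'I_N) ((s^-1)%g a < (s^-1)%g c : nat))%N = (s^-1)%g c.
  rewrite (reindex_inj (@perm_inj _ s)) /=.
  under eq_bigr => i _ do rewrite -permM mulgV perm1.
  by rewrite sum_lt_ord // ltnW.
rewrite -[X in (_ + X)%N]e1.
rewrite -[X in (_ = X + _)%N](@sum_lt_ord N c (ltnW (ltn_ord c))).
rewrite -!big_split /=.
apply: eq_bigr => a _.
case: (eqVneq a c) => [->|ac]; first by rewrite !ltnn /= ?andbF.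
have pac : (s^-1)%g a != (s^-1)%g c by rewrite (inj_eq (@perm_inj _ _)).
move: ac pac; rewrite -!val_eqE /=.
case: ltngtP => //= h1 _; case: ltngtP => //.
Qed.

Lemma mvarE (V : finType) (v w : V) : mvar v w = (w == v)%:R.
Proof. by rewrite ffunE. Qed.

Lemma hsE N (x y : 'I_N -> int) s c :
  h_sigma x y s c = (c%:Z - ((s^-1)%g c)%:Z) + x ((s^-1)%g c) - y c - 1.
Proof.
rewrite /h_sigma ffunE !sum_ffunE.
have -> : \sum_(i : 'I_N) (mvar (s i) *~ (x i - y (s i) - 1)) c
   = x ((s^-1)%g c) - y c - 1.
  rewrite (bigD1 ((s^-1)%g c)) //= ffunMzE mvarE permKV eqxx intz big1 ?addr0 //.
  move=> i ic; rewrite ffunMzE mvarE.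
  have -> : (c == s i) = false.
    apply/negbTE/eqP=> e; move/eqP: ic; apply; by rewrite e permK.
  by rewrite mul0rz.
rewrite !addrA; do 2 congr (_ - _); congr (_ + _).
under eq_bigr => b _ do rewrite sum_ffunE.
under eq_bigr => b _ do (under eq_bigr => a _ do rewrite !ffunE).
under eq_bigr => b _ do rewrite sumrB.
rewrite sumrB.
have -> : \sum_(b : 'I_N) \sum_(a : 'I_N | (a < b)%N && ((s^-1)%g b < (s^-1)%g a)%N)
   ((c == b)%:R : int)
   = (\sum_(a : 'I_N) ((a < c) && ((s^-1)%g c < (s^-1)%g a)%N : nat))%:R.
  rewrite (bigD1 c) //= [X in _ + X]big1 ?addr0; last first.
    move=> b /negbTE bc; apply: big1 => a _; by rewrite eq_sym bc.
  rewrite natr_sum big_mkcond /=; apply: eq_bigr => a _.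
  by rewrite eqxx; case: ifP.
have -> : \sum_(b : 'I_N) \sum_(a : 'I_N | (a < b)%N && ((s^-1)%g b < (s^-1)%g a)%N)
   ((c == a)%:R : int)
   = (\sum_(b : 'I_N) ((c < b) && ((s^-1)%g b < (s^-1)%g c)%N : nat))%:R.
  rewrite natr_sum; apply: eq_bigr => b _.
  rewrite big_mkcond (bigD1 c) //= eqxx [X in _ + X]big1 ?addr0; last first.
    by move=> a /negbTE; rewrite eq_sym => ->; case: ifP.
  by case: ifP.
have := @inv_count N s c.
move=> /(f_equal Posz); rewrite !PoszD !natz.
lia.
Qed.
Lemma mzE (a : int) k : (a == 0) = false -> a = 1 -> a *~ k = k.
Proof. by move=> _ ->; rewrite intz. Qed.

Lemma ffunBE (V : finType) (f g : {ffun V -> int}) w : (f - g) w = f w - g w.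
Proof. by rewrite !ffunE. Qed.

Lemma someE (T : eqType) (a b : T) : (Some a == Some b) = (a == b).
Proof. by []. Qed.

Lemma hgE N (x y : 'I_N -> int) g s v :
  h_gamma x y g s v =
  match v with
  | None => h_sigma x y s g
  | Some d => if d == g then 0 else h_sigma x y s d - h_sigma x y s g
  end.
Proof.
rewrite /h_gamma /msubst; set m := h_sigma x y s.
rewrite sum_ffunE (bigD1 g) //= eqxx ffunMzE.
have xiE d w : xi d w = (w == Some d)%:R by rewrite /xi mvarE.
rewrite ffunBE /eta mvarE sum_ffunE.
rewrite [\sum_(i < N | i != g) xi i v](eq_bigr (fun i : 'I_N => (v == Some i)%:R)); last by move=> i _; rewrite xiE.
rewrite [X in _ + X](eq_bigr (fun i : 'I_N => (v == Some i)%:R *~ m i)); last first.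
  by move=> i /negbTE ->; rewrite ffunMzE xiE.
case: v => [d|].
- rewrite /=.
  under eq_bigr => i _ do rewrite someE.
  under [X in _ + X]eq_bigr => i _ do rewrite someE.
  case: (eqVneq d g) => [->|dg].
    rewrite big1 ?subr0; last by move=> i /negbTE ig; rewrite eq_sym ig.
    rewrite mul0rz add0r big1 // => i /negbTE ig; by rewrite eq_sym ig mul0rz.
  rewrite (bigD1 d) //= eqxx big1 ?addr0; last first.
    by move=> i /andP[_ /negbTE id]; rewrite eq_sym id.
  rewrite (bigD1 d) //= eqxx intz big1 ?addr0; last first.
    by move=> i /andP[_ /negbTE id]; rewrite eq_sym id mul0rz.
  by rewrite sub0r mulNrz intz addrC.
- rewrite big1 ?subr0 ?intz; last by [].
  by rewrite big1 ?addr0 // => i _; rewrite mul0rz.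
Qed.

Lemma restrE N (a b : 'I_N) M v : a != b ->
  restr_eq a b M v = (if v == Some b then 0 else M v) +
                     (if v == Some a then M (Some b) else 0).
Proof.
move=> ab; rewrite /restr_eq /msubst sum_ffunE (bigD1 (Some b)) //= eqxx.
rewrite ffunMzE ffunE addrC; congr (_ + _); last by case: ifP; rewrite ?intz ?mul0rz.
under eq_bigr => u /negbTE -> do rewrite ffunMzE ffunE.
case: (eqVneq v (Some b)) => [->|vb].
  by rewrite big1 // => u /negbTE ub; rewrite eq_sym ub mul0rz.
rewrite (bigD1 v) //= eqxx intz big1 ?addr0 // => u /andP[_ /negbTE uv].
by rewrite eq_sym uv mul0rz.
Qed.
Lemma incr_gap N (x : 'I_N -> int) : increasing x ->
  forall i j : 'I_N, (i <= j)%N -> (j%:Z - i%:Z) <= x j - x i.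
Proof.
move=> Hx.
suff H : forall k (i j : 'I_N), (j : nat) = (i + k)%N -> (k%:Z) <= x j - x i.
  move=> i j ij; have := H (j - i)%N i j; rewrite subnKC //.
  by move=> /(_ erefl); rewrite subzn.
elim=> [|k IH] i j ji.
  have -> : j = i by apply/val_inj; rewrite /= ji addn0.
  by rewrite subrr.
have lt : (i + k < N)%N by have := ltn_ord j; rewrite ji; lia.
have := IH i (Ordinal lt) erefl.
have := Hx (Ordinal lt) j; rewrite ji addnS => /(_ erefl).
move: (x (Ordinal lt)) (x j) (x i) => a b c h1 h2.
lia.
Qed.

Lemma keyineq (a g pa pg xa xg ya yg : int) :
  pg - pa <= xg - xa -> a - g <= ya - yg ->
  (a - pa + xa - ya - 1) - (g - pg + xg - yg - 1) <= 0.
Proof. lia. Qed.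

Lemma hgS N (x y : 'I_N -> int) g s d : d != g ->
  h_gamma x y g s (Some d) = h_sigma x y s d - h_sigma x y s g.
Proof. by move=> dg; rewrite hgE (negbTE dg). Qed.

Theorem lemma3p5 (N : nat) (x y : 'I_N -> int) (sigma sigma' : {perm 'I_N})
    (alpha beta gamma : 'I_N) :
  increasing x -> increasing y ->
  adjacent_swap sigma sigma' alpha beta ->
  gamma != alpha -> gamma != beta ->
  restr_eq alpha beta (h_gamma x y gamma sigma)
    = restr_eq alpha beta (h_gamma x y gamma sigma') /\
  (((sigma^-1)%g alpha < (sigma^-1)%g gamma)%N -> ((sigma^-1)%g beta < (sigma^-1)%g gamma)%N ->
   (gamma < alpha)%N -> (gamma < beta)%N ->
   [/\ h_gamma x y gamma sigma (Some alpha) <= 0,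
       h_gamma x y gamma sigma (Some beta) <= 0,
       h_gamma x y gamma sigma' (Some alpha) <= 0 &
       h_gamma x y gamma sigma' (Some beta) <= 0]).
Proof.
move=> Hx Hy [ab _ Hs'] ga gb.
have s'E : sigma' = (sigma * tperm alpha beta)%g by apply/permP => k; rewrite permM Hs'.
have invE c : (sigma'^-1)%g c = (sigma^-1)%g (tperm alpha beta c).
  by rewrite s'E invMg tpermV permM.
have mo c : c != alpha -> c != beta -> h_sigma x y sigma' c = h_sigma x y sigma c.
  by move=> ca cb; rewrite !hsE invE tpermD // eq_sym.
have ms : h_sigma x y sigma' alpha + h_sigma x y sigma' beta
        = h_sigma x y sigma alpha + h_sigma x y sigma beta.
  rewrite !hsE !invE tpermL tpermR; ring.
have mg := mo gamma ga gb.
have ag : (alpha == gamma) = false by rewrite eq_sym (negbTE ga).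
have bg : (beta == gamma) = false by rewrite eq_sym (negbTE gb).
have ag' : alpha != gamma by rewrite ag.
have bg' : beta != gamma by rewrite bg.
split.
  apply/ffunP => v.
  rewrite !(restrE _ _ _ _ _ ab) (hgE _ x y gamma sigma v) (hgE _ x y gamma sigma' v).
  rewrite (hgS _ x y gamma sigma _ bg') (hgS _ x y gamma sigma' _ bg').
  move: mo ms mg; move: (h_sigma x y sigma) (h_sigma x y sigma') => m m' mo ms mg.
  case: v => [d|]; last by rewrite mg.
  rewrite !someE mg.
  case: (eqVneq d beta) => [e|db]; first by subst d; rewrite ?eqxx eq_sym (negbTE ab).
  case: (eqVneq d alpha) => [e|da]; first subst d.
    rewrite (negbTE ag'); apply/eqP; rewrite -subr_eq0; apply/eqP.
    have : m' alpha = m alpha + m beta - m' beta by rewrite -ms; ring.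
    move=> ->; ring.
  case: (eqVneq d gamma) => [e|dg]; first by subst d.
  by rewrite mo.
move=> pa pb gla glb.
rewrite (hgS _ x y gamma sigma _ ag') (hgS _ x y gamma sigma _ bg').
rewrite (hgS _ x y gamma sigma' _ ag') (hgS _ x y gamma sigma' _ bg').
rewrite !hsE !invE tpermL tpermR (tpermD ag' bg').
have yga := @incr_gap _ _ Hy _ _ (ltnW gla).
have ygb := @incr_gap _ _ Hy _ _ (ltnW glb).
have xa := @incr_gap _ _ Hx _ _ (ltnW pa).
have xb := @incr_gap _ _ Hx _ _ (ltnW pb).
by split; apply: keyineq.
Qed.
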